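(* Fix $\epsilon,\phi\in\mathbb R$ with $|\phi|>1$ and $\epsilon\ne\phi$. For each $n$, let $(\nu_n,\mathbf y_n)$ be an eigenpair of $T_{n,\epsilon,\phi}$ with $\|\mathbf y_n\|_2=1$, and suppose $\nu_n\to\phi+\phi^{-1}$ as $n\to\infty$. Then: 1. Eventually, $\nu_n$ is an outlier of $T_{n,\epsilon,\phi}$, and there is a constant $c>0$ independent of $n$ such that eventually every eigenvalue $\lambda_n\ne\nu_n$ of $T_{n,\epsilon,\phi}$ satisfies $|\lambda_n-(\phi+\phi^{-1})|\ge c$. 2. $\|\mathbf y_n-P_{\mathbf w_n}\mathbf y_n\|_2\to0$ as $n\to\infty$, where $\mathbf w_n=[\phi^{-n+1},\ldots,\phi^{-1},1]^\top$.
   Context: For $n\ge2$ and real parameters $\epsilon,\phi$, $T_{n,\epsilon,\phi}$ is the real symmetric tridiagonal $n\times n$ matrix with diagonal entries $(\epsilon,0,\ldots,0,\phi)$ and all sub- and super-diagonal entries equal to $1$. An outlier is an eigenvalue not in $[-2,2]$. For $\mathbf u\in\mathbb R^n\setminus\{0\}$, $P_{\mathbf u}$ denotes the orthogonal projector onto $\mathrm{span}\{\mathbf u\}$: $P_{\mathbf u}\mathbf x=\frac{\mathbf x^\top\mathbf u}{\mathbf u^\top\mathbf u}\mathbf u$. *)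

(* Defs.v *)
From HB Require Import structures.
From mathcomp Require Import all_boot all_order all_algebra.
From mathcomp Require Import all_classical all_reals all_analysis.
Set Implicit Arguments. Unset Strict Implicit. Unset Printing Implicit Defensive.
Import Order.TTheory GRing.Theory Num.Theory.
Local Open Scope ring_scope.

Section Defs.
Variable R : realType.

(* T_{n,eps,phi}: symmetric tridiagonal, diagonal (eps,0,...,0,phi),
   off-diagonals 1.  Meaningful for n >= 2. *)
Definition Tmat (n : nat) (eps phi : R) : 'M[R]_n :=
  \matrix_(i < n, j < n)
    if i == j then
      (if (i : nat) == 0%N then eps else if (i : nat) == n.-1 then phi else 0)
    else if ((i : nat) == j.+1) || ((j : nat) == i.+1) then 1 else 0.

Definition vnorm2 (n : nat) (v : 'cV[R]_n) : R :=
  Num.sqrt (\sum_(i < n) v i 0 ^+ 2).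

Definition projspan (n : nat) (u x : 'cV[R]_n) : 'cV[R]_n :=
  ((x^T *m u) 0 0 / (u^T *m u) 0 0) *: u.

Definition wvec (n : nat) (phi : R) : 'cV[R]_n :=
  \col_(i < n) phi ^- (n.-1 - i)%N.

Definition outlier (n : nat) (A : 'M[R]_n) (x : R) : Prop :=
  eigenvalue A x /\ ~ (-2 <= x <= 2).

End Defs.

(* Main.v *)
Require Import Defs.
From HB Require Import structures.
From mathcomp Require Import all_boot all_order all_algebra.
From mathcomp Require Import all_classical all_reals all_analysis.
From mathcomp Require Import ring lra zify.
Import Order.TTheory GRing.Theory Num.Theory.
Import numFieldNormedType.Exports.
Local Open Scope classical_set_scope.
Local Open Scope ring_scope.



Section RealLemmas.
Variable R : realFieldType.

Lemma sqnorm (x : R) : `|x| ^+ 2 = x ^+ 2.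
Proof. exact: real_normK (num_real _). Qed.

Lemma conv_sq (r p q : R) : 0 <= r -> r < 1 -> 0 <= p -> 0 <= q ->
  (r * p + q) ^+ 2 <= r * p ^+ 2 + q ^+ 2 / (1 - r).
Proof.
move=> r0 r1 p0 q0.
have h1 : 0 < 1 - r by lra.
rewrite -(ler_pM2r h1) mulrDl (mulrAC _ _ (1 - r)) mulfVK; last by lra.
have : 0 <= r * ((1 - r) * p - q) ^+ 2 by apply: mulr_ge0 => //; exact: sqr_ge0.
by move=> h; nra.
Qed.

Lemma pw_sq (r u v b : R) : 0 <= r -> r < 1 ->
  `|u| <= r * `|v| + `|b| -> u ^+ 2 <= r * v ^+ 2 + b ^+ 2 / (1 - r).
Proof.
move=> r0 r1 h.
rewrite -sqnorm -(sqnorm v) -(sqnorm b).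
have h2 : `|u| ^+ 2 <= (r * `|v| + `|b|) ^+ 2.
  by apply: lerXn2r; rewrite ?nnegrE //; apply: addr_ge0 => //; apply: mulr_ge0.
apply: (le_trans h2); apply: conv_sq => //; exact: normr_ge0.
Qed.

Lemma sum_shift_le (f : nat -> R) N : (forall k, 0 <= f k) ->
  \sum_(k < N) f k.+1 <= \sum_(k < N.+1) f k.
Proof.
move=> f0; rewrite big_ord_recl /=.
rewrite -[X in X <= _]add0r lerD2r //.
Qed.

Lemma sum_ext_le (f : nat -> R) N : (forall k, 0 <= f k) ->
  \sum_(k < N) f k <= \sum_(k < N.+1) f k.
Proof.
move=> f0; rewrite big_ord_recr /=.
by rewrite -[X in X <= _]addr0 lerD2l.
Qed.

Lemma l2_fwd (r : R) (a b : nat -> R) N : 0 <= r -> r < 1 ->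
  (forall k, (k < N)%N -> `|a k.+1| <= r * `|a k| + `|b k|) ->
  (1 - r) * \sum_(k < N.+1) a k ^+ 2 <= a 0%N ^+ 2 + (\sum_(k < N) b k ^+ 2) / (1 - r).
Proof.
move=> r0 r1 h.
have hs : \sum_(k < N) a k.+1 ^+ 2 <= \sum_(k < N) (r * a k ^+ 2 + b k ^+ 2 / (1 - r)).
  by apply: ler_sum => i _; apply: pw_sq => //; apply: h.
rewrite big_split /= -mulr_sumr -mulr_suml in hs.
have e1 : \sum_(k < N.+1) a k ^+ 2 = a 0%N ^+ 2 + \sum_(k < N) a k.+1 ^+ 2.
  by rewrite big_ord_recl.
have e2 := sum_ext_le (fun k => a k ^+ 2) N (fun k => sqr_ge0 _).
simpl in e2.
rewrite e1; rewrite e1 in e2.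
have hb : 0 <= (\sum_(k < N) b k ^+ 2) / (1 - r).
  by apply: divr_ge0; [apply: sumr_ge0 => i _; apply: sqr_ge0 | lra].
have ha : 0 <= a 0%N ^+ 2 by apply: sqr_ge0.
nra.
Qed.

Lemma l2_bwd (r : R) (a b : nat -> R) N : 0 <= r -> r < 1 ->
  (forall k, (k < N)%N -> `|a k| <= r * `|a k.+1| + `|b k|) ->
  (1 - r) * \sum_(k < N.+1) a k ^+ 2 <= a N ^+ 2 + (\sum_(k < N) b k ^+ 2) / (1 - r).
Proof.
move=> r0 r1 h.
have hs : \sum_(k < N) a k ^+ 2 <= \sum_(k < N) (r * a k.+1 ^+ 2 + b k ^+ 2 / (1 - r)).
  by apply: ler_sum => i _; apply: pw_sq => //; apply: h.
rewrite big_split /= -mulr_sumr -mulr_suml in hs.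
have e1 : \sum_(k < N.+1) a k ^+ 2 = \sum_(k < N) a k ^+ 2 + a N ^+ 2.
  by rewrite big_ord_recr.
have e2 := sum_shift_le (fun k => a k ^+ 2) N (fun k => sqr_ge0 _).
simpl in e2.
rewrite e1; rewrite e1 in e2.
have hb : 0 <= (\sum_(k < N) b k ^+ 2) / (1 - r).
  by apply: divr_ge0; [apply: sumr_ge0 => i _; apply: sqr_ge0 | lra].
have ha : 0 <= a N ^+ 2 by apply: sqr_ge0.
have hs0 : 0 <= \sum_(k < N) a k ^+ 2 by apply: sumr_ge0 => i _; apply: sqr_ge0.
nra.
Qed.

Lemma iter_bd (r be : R) N (a : nat -> R) : 0 <= r -> r < 1 -> 0 <= be ->
  (forall k, (k < N)%N -> `|a k| <= r * `|a k.+1| + be) ->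
  `|a 0%N| <= r ^+ N * `|a N| + be / (1 - r).
Proof.
move=> r0 r1 b0; elim: N a => [|N IH] a h.
  rewrite expr0 mul1r; have : 0 <= be / (1 - r) by apply: divr_ge0; lra.
  lra.
have h1 := IH (fun k => a k.+1) (fun k hk => h k.+1 hk).
simpl in h1.
have h0 := h 0%N isT.
have e : be / (1 - r) = r * (be / (1 - r)) + be.
  by field; lra.
rewrite exprS -mulrA e.
have : r * `|a 1%N| <= r * (r ^+ N * `|a N.+1| + be / (1 - r)) by apply: ler_wpM2l.
lra.
Qed.

End RealLemmas.
Arguments sqnorm {R}.
Arguments conv_sq {R}.
Arguments pw_sq {R}.
Arguments sum_shift_le {R}.
Arguments sum_ext_le {R}.
Arguments l2_fwd {R} [r a b N].
Arguments l2_bwd {R} [r a b N].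
Arguments iter_bd {R} [r be N a].


Section Loc.
Variable R : realFieldType.

Definition Kc (phi eps : R) : R :=
  let r := `|phi|^-1 in
  let g := `|phi - eps| / 2 in
  let C0 := (2 + r / (1 - r)) / g in
  let C1 := r + 1 + `|eps| in
  r ^+ 2 / (1 - r) ^+ 3 * (C1 ^+ 2 * C0 ^+ 2 + 1 / (1 - r)).

Lemma Kc_gt0 (phi eps : R) : 1 < `|phi| -> eps != phi -> 0 < Kc phi eps.
Proof.
move=> hp he; rewrite /Kc.
have r0 : 0 < `|phi|^-1 by rewrite invr_gt0; lra.
have r1 : `|phi|^-1 < 1 by rewrite invf_lt1 //; lra.
have g0 : 0 < `|phi - eps| / 2.
  by apply: divr_gt0 => //; rewrite normr_gt0 subr_eq0 eq_sym.
apply: mulr_gt0; first by apply: divr_gt0; [exact: exprn_gt0 | apply: exprn_gt0; lra].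
apply: ltr_wpDl; first by apply: mulr_ge0; exact: sqr_ge0.
by apply: divr_gt0; lra.
Qed.

Lemma sq_le_sum (x : nat -> R) N k : (k < N)%N ->
  x k ^+ 2 <= \sum_(i < N) x i ^+ 2.
Proof.
move=> hk; rewrite (bigD1 (Ordinal hk)) //=.
rewrite -[X in X <= _]addr0 lerD2l; apply: sumr_ge0 => i _; exact: sqr_ge0.
Qed.

Lemma loc_nat (phi eps mu : R) (M : nat) (x : nat -> R) :
  1 < `|phi| -> eps != phi ->
  eps * x 0%N + x 1%N = mu * x 0%N ->
  (forall j, (j.+2 <= M.+1)%N -> x j + x j.+2 = mu * x j.+1) ->
  \sum_(k < M.+2) x k ^+ 2 <= 1 ->
  `|mu - (phi + phi^-1)| <= 1 -> 2 * `|mu - (phi + phi^-1)| <= `|phi - eps| ->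
  \sum_(k < M.+2) (x k - phi ^- (M.+1 - k) * x M.+1) ^+ 2
    <= Kc phi eps * (`|phi|^-1 ^+ M + `|mu - (phi + phi^-1)|) ^+ 2.
Proof.
move=> hp hne H0 Hint Hs hd1 hd2.
set d := mu - (phi + phi^-1) in hd1 hd2 *.
set r := `|phi|^-1.
have r0 : 0 < r by rewrite invr_gt0; lra.
have r1 : r < 1 by rewrite invf_lt1 //; lra.
have phi0 : phi != 0 by rewrite -normr_gt0; lra.
have hinv : forall a, `|phi^-1 * a| = r * `|a| by move=> a; rewrite normrM normfV.
have nx : forall k, (k < M.+2)%N -> `|x k| <= 1.
  move=> k hk; have := @sq_le_sum x _ _ hk; rewrite -sqnorm => h.
  have : `|x k| ^+ 2 <= 1 by apply: le_trans Hs.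
  have := normr_ge0 (x k); nra.
set s := r ^+ M + `|d|.
have rM0 : 0 <= r ^+ M by apply: exprn_ge0; lra.
have nd0 := normr_ge0 d.
set P := fun k => x k.+1 - phi^-1 * x k.
have hP : forall j, (j < M)%N -> `|P j| <= r * `|P j.+1| + r * `|d|.
  move=> j hj.
  have ee1 : P j = phi^-1 * (P j.+1 - d * x j.+1).
    have e2 : x j.+2 = mu * x j.+1 - x j by rewrite -(Hint j) //; ring.
    by rewrite /P e2 /d; field.
  rewrite ee1 hinv -mulrDr; apply: ler_wpM2l; first lra.
  apply: le_trans (ler_normB _ _) _; rewrite lerD2l normrM.
  have : `|x j.+1| <= 1 by apply: nx; lia.
  nra.
have hP0 := iter_bd (ltW r0) r1 (mulr_ge0 (ltW r0) nd0) hP.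
have hPM : `|P M| <= 2.
  rewrite /P; apply: le_trans (ler_normB _ _) _; rewrite hinv.
  have := nx M.+1 (ltnSn _); have := nx M (ltnW (ltnSn _)).
  have := normr_ge0 (x M); nra.
have eP0 : P 0%N = (phi - eps + d) * x 0%N.
  have e1 : x 1%N = mu * x 0%N - eps * x 0%N by rewrite -H0; ring.
  by rewrite /P e1 /d; ring.
set g := `|phi - eps| / 2.
have g0 : 0 < g by apply: divr_gt0 => //; rewrite normr_gt0 subr_eq0 eq_sym.
have hg : g <= `|phi - eps + d|.
  have : `|phi - eps| <= `|phi - eps + d| + `|d|.
    by rewrite -{1}(addrK d (phi - eps)); apply: ler_normB.
  rewrite /g; lra.
set t := r / (1 - r).
have t0 : 0 <= t by apply: divr_ge0; lra.
have hx0 : `|x 0%N| <= (2 + t) / g * s.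
  rewrite mulrAC ler_pdivlMr //.
  have h1 : g * `|x 0%N| <= `|P 0%N|.
    by rewrite eP0 normrM; apply: ler_wpM2r => //.
  have h2 : r * `|d| / (1 - r) = t * `|d| by rewrite /t mulrAC.
  rewrite h2 in hP0.
  have h3 : r ^+ M * `|P M| <= 2 * r ^+ M by rewrite mulrC; apply: ler_wpM2r.
  have h4 : 0 <= t * r ^+ M by apply: mulr_ge0.
  have h5 : 0 <= 2 * `|d| by lra.
  rewrite /s !mulrDr !mulrDl; lra.
set Q := fun k => x k.+1 - phi * x k.
have hQ : forall j, (j < M)%N -> `|Q j.+1| <= r * `|Q j| + `|d * x j.+1|.
  move=> j hj.
  have ee1 : Q j.+1 = phi^-1 * Q j + d * x j.+1.
    have e2 : x j.+2 = mu * x j.+1 - x j by rewrite -(Hint j) //; ring.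
    by rewrite /Q e2 /d; field.
  by rewrite ee1 -hinv; apply: ler_normD.
have hQs := l2_fwd (ltW r0) r1 hQ.
have hbx : \sum_(k < M) (d * x k.+1) ^+ 2 <= d ^+ 2.
  under eq_bigr do rewrite exprMn.
  rewrite -mulr_sumr -[X in _ <= X]mulr1; apply: ler_wpM2l; first exact: sqr_ge0.
  apply: le_trans (sum_shift_le _ _ (fun k => sqr_ge0 (x k))) _.
  by apply: le_trans (sum_ext_le _ _ (fun k => sqr_ge0 (x k))) _.
set C1 := r + 1 + `|eps|.
have hQ0 : `|Q 0%N| <= C1 * `|x 0%N|.
  have e1 : x 1%N = mu * x 0%N - eps * x 0%N by rewrite -H0; ring.
  have eQ : Q 0%N = (phi^-1 - eps + d) * x 0%N by rewrite /Q e1 /d; ring.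
  rewrite eQ normrM; apply: ler_wpM2r => //.
  have h1 := ler_normD (phi^-1 - eps) d; have h2 := ler_normB phi^-1 eps.
  rewrite normfV in h2; rewrite /C1 /r; lra.
set e := fun k => x k - phi ^- (M.+1 - k) * x M.+1.
have he : forall k, (k < M.+1)%N -> `|e k| <= r * `|e k.+1| + `|phi^-1 * Q k|.
  move=> k hk.
  have ee : e k = phi^-1 * (e k.+1 - Q k).
    by rewrite /e /Q subSn // subSS -!exprVn exprS; field.
  rewrite ee hinv hinv -mulrDr; apply: ler_wpM2l; first lra.
  exact: ler_normB.
have hes := l2_bwd (ltW r0) r1 he.
have eM : e M.+1 = 0 by rewrite /e subnn expr0 invr1 mul1r subrr.
rewrite eM expr0n /= add0r in hes.
have eQs : \sum_(k < M.+1) (phi^-1 * Q k) ^+ 2 = r ^+ 2 * \sum_(k < M.+1) Q k ^+ 2.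
  rewrite mulr_sumr; apply: eq_bigr => i _.
  by rewrite exprMn -(sqnorm phi^-1) normfV.
rewrite eQs in hes.
set SE := \sum_(k < M.+2) e k ^+ 2.
set SQ := \sum_(k < M.+1) Q k ^+ 2.
change (SE <= Kc phi eps * s ^+ 2).
set C0 := (2 + t) / g.
have Kdef : Kc phi eps = r ^+ 2 / (1 - r) ^+ 3 * (C1 ^+ 2 * C0 ^+ 2 + 1 / (1 - r)) by [].
have a0 : 0 < 1 - r by lra.
have hQ02 : Q 0%N ^+ 2 <= C1 ^+ 2 * C0 ^+ 2 * s ^+ 2.
  rewrite -sqnorm -!exprMn; apply: lerXn2r; rewrite ?nnegrE //.
  - apply: mulr_ge0; last (rewrite /s; lra).
    apply: mulr_ge0; first (rewrite /C1; have := normr_ge0 eps; lra).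
    by apply: divr_ge0; [lra | exact: ltW].
  - apply: le_trans hQ0 _; rewrite -mulrA; apply: ler_wpM2l.
      by rewrite /C1; have := normr_ge0 eps; lra.
    exact: hx0.
have hd2s : d ^+ 2 <= s ^+ 2.
  rewrite -sqnorm; apply: lerXn2r; rewrite ?nnegrE // /s; lra.
have hSQ : (1 - r) * SQ <= C1 ^+ 2 * C0 ^+ 2 * s ^+ 2 + s ^+ 2 / (1 - r).
  apply: le_trans hQs _; apply: lerD => //.
  by apply: ler_wpM2r; [rewrite invr_ge0; lra | exact: le_trans hbx hd2s].
have hSE : (1 - r) * SE <= r ^+ 2 * SQ / (1 - r) by [].
have SQ0 : 0 <= SQ by apply: sumr_ge0 => i _; exact: sqr_ge0.
rewrite Kdef.
have -> : r ^+ 2 / (1 - r) ^+ 3 * (C1 ^+ 2 * C0 ^+ 2 + 1 / (1 - r)) * s ^+ 2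
   = (r ^+ 2 / (1 - r) ^+ 2) * ((C1 ^+ 2 * C0 ^+ 2 * s ^+ 2 + s ^+ 2 / (1 - r)) / (1 - r)).
  by field; lra.
have hSQ' : SQ <= (C1 ^+ 2 * C0 ^+ 2 * s ^+ 2 + s ^+ 2 / (1 - r)) / (1 - r).
  by rewrite ler_pdivlMr // mulrC.
have hSE' : SE <= r ^+ 2 / (1 - r) ^+ 2 * SQ.
  rewrite -ler_pdivlMl // in hSE.
  have -> : r ^+ 2 / (1 - r) ^+ 2 * SQ = (1 - r)^-1 * (r ^+ 2 * SQ / (1 - r)) by field; lra.
  exact: hSE.
apply: le_trans hSE' _; apply: ler_wpM2l => //.
by apply: divr_ge0; [exact: sqr_ge0 | apply: exprn_ge0; lra].
Qed.

End Loc.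
Arguments Kc {R}.
Arguments Kc_gt0 {R}.
Arguments sq_le_sum {R}.
Arguments loc_nat {R} [phi eps mu M x].


Section Mat.
Variable R : realType.

Lemma Tmat_tr n (eps phi : R) : (Tmat n eps phi)^T = Tmat n eps phi.
Proof.
apply/matrixP => i j; rewrite !mxE eq_sym.
case: eqP => [-> //|_]; by rewrite orbC.
Qed.

Lemma Tmat_entry n (eps phi : R) (i j : 'I_n) :
  Tmat n eps phi i j =
  ((j : nat) == (i : nat))%:R * (if (i : nat) == 0%N then eps else if (i : nat) == n.-1 then phi else 0)
  + ((i : nat) == j.+1)%:R + ((j : nat) == i.+1)%:R.
Proof.
rewrite mxE.
case: (i =P j) => [->|hij].
  rewrite eqxx mul1r.
  have -> : ((j : nat) == j.+1) = false by apply/eqP; lia.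
  by rewrite !addr0.
have -> : ((j : nat) == (i : nat)) = false.
  by apply/eqP => h; apply: hij; apply/val_inj.
rewrite mul0r add0r.
case h1 : ((i : nat) == j.+1); case h2 : ((j : nat) == i.+1) => //=.
- move/eqP: h1 => h1; move/eqP: h2 => h2; lia.
- by rewrite addr0.
- by rewrite add0r.
- by rewrite addr0.
Qed.

Lemma sum_ind N (f : 'I_N.+1 -> R) k :
  \sum_(j < N.+1) (((j : nat) == k)%:R * f j) = if (k <= N)%N then f (inord k) else 0.
Proof.
case: leqP => hk.
  rewrite (bigD1 (inord k)) //= inordK // eqxx mul1r big1 ?addr0 // => j hj.
  have -> : ((j : nat) == k) = false.
    apply/eqP => h; move/eqP: hj; apply; apply/val_inj; by rewrite /= inordK.
  by rewrite mul0r.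
rewrite big1 // => j _.
have -> : ((j : nat) == k) = false by apply/eqP => h; have := ltn_ord j; lia.
by rewrite mul0r.
Qed.

Lemma Tmat_row M (eps phi : R) (v : 'cV[R]_(M.+2)) k : (k < M.+2)%N ->
  (Tmat M.+2 eps phi *m v) (inord k) 0 =
  (if k == 0%N then eps else if k == M.+1 then phi else 0) * v (inord k) 0
  + (if k is k'.+1 then v (inord k') 0 else 0)
  + (if (k < M.+1)%N then v (inord k.+1) 0 else 0).
Proof.
move=> hk; rewrite mxE.
under eq_bigr do rewrite Tmat_entry !mulrDl.
rewrite !big_split /= inordK //.
under eq_bigr do rewrite mulrAC.
rewrite -mulr_suml sum_ind (_ : (k <= M.+1)%N = true); last by lia.
congr (_ + _ + _); first by rewrite mulrC.
  case: k hk => [|k] hk /=.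
    by rewrite big1 // => j _; rewrite mul0r.
  under eq_bigr do rewrite eqSS eq_sym.
  by rewrite sum_ind (_ : (k <= M.+1)%N = true) //; lia.
by rewrite sum_ind.
Qed.

End Mat.

Section Mat2.
Variable R : realType.

Lemma loc_mat (phi eps mu : R) M (v : 'cV[R]_(M.+2)) :
  1 < `|phi| -> eps != phi -> Tmat M.+2 eps phi *m v = mu *: v ->
  \sum_(i < M.+2) v i 0 ^+ 2 <= 1 ->
  `|mu - (phi + phi^-1)| <= 1 -> 2 * `|mu - (phi + phi^-1)| <= `|phi - eps| ->
  \sum_(i < M.+2) (v i 0 - phi ^- (M.+1 - i) * v ord_max 0) ^+ 2
    <= Kc phi eps * (`|phi|^-1 ^+ M + `|mu - (phi + phi^-1)|) ^+ 2.
Proof.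
move=> hp hne hT hs hd1 hd2.
pose x := fun k => v (inord k) 0.
have hrow k : (k < M.+2)%N -> (Tmat M.+2 eps phi *m v) (inord k) 0 = mu * x k.
  by move=> _; rewrite hT mxE.
have H0 : eps * x 0%N + x 1%N = mu * x 0%N.
  rewrite -hrow // Tmat_row //= addr0 //.
have Hint : forall j, (j.+2 <= M.+1)%N -> x j + x j.+2 = mu * x j.+1.
  move=> j hj; rewrite -hrow; last lia.
  rewrite Tmat_row; last lia.
  have -> : (j.+1 == M.+1) = false by apply/eqP; lia.
  have -> : (j.+1 < M.+1)%N = true by lia.
  by rewrite /= mul0r add0r.
have ex : forall i : 'I_M.+2, v i 0 = x i by move=> i; rewrite /x inord_val.
have exM : v ord_max 0 = x M.+1.
  by rewrite /x; congr (v _ 0); apply/val_inj; rewrite /= inordK.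
have hs' : \sum_(k < M.+2) x k ^+ 2 <= 1.
  by rewrite (eq_bigr (fun i : 'I_M.+2 => v i 0 ^+ 2)) // => i _; rewrite ex.
have := loc_nat hp hne H0 Hint hs' hd1 hd2.
by rewrite (eq_bigr (fun i : 'I_M.+2 => (v i 0 - phi ^- (M.+1 - i) * v ord_max 0) ^+ 2)) // => i _; rewrite ex exM.
Qed.

End Mat2.
Arguments Tmat_tr {R}.
Arguments Tmat_row {R}.
Arguments loc_mat {R} [phi eps mu M v].


Section Lin.
Variable R : realType.

Lemma dotE N (v w : 'cV[R]_N) : (v^T *m w) 0 0 = \sum_(i < N) v i 0 * w i 0.
Proof. by rewrite mxE; apply: eq_bigr => i _; rewrite mxE. Qed.

Lemma sq_expand N (a b : 'I_N -> R) (c : R) :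
  \sum_(i < N) (a i - c * b i) ^+ 2 =
  \sum_(i < N) a i ^+ 2 - c *+ 2 * \sum_(i < N) a i * b i + c ^+ 2 * \sum_(i < N) b i ^+ 2.
Proof.
rewrite !mulr_sumr -sumrB -big_split; apply: eq_bigr => i _ /=; ring.
Qed.

Lemma proj_le N (v w : 'cV[R]_N) (c : R) : 0 < \sum_(i < N) w i 0 ^+ 2 ->
  \sum_(i < N) ((v - projspan w v) i 0) ^+ 2 <= \sum_(i < N) (v i 0 - c * w i 0) ^+ 2.
Proof.
move=> W0.
rewrite /projspan !dotE.
set B := \sum_(i < N) v i 0 * w i 0.
set W := \sum_(i < N) w i 0 * w i 0.
have eW : W = \sum_(i < N) w i 0 ^+ 2 by apply: eq_bigr => i _; rewrite expr2.
rewrite (eq_bigr (fun i : 'I_N => (v i 0 - B / W * w i 0) ^+ 2)); last first.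
  by move=> i _; rewrite !mxE.
rewrite !sq_expand -/B -eW.
have hW : 0 < W by rewrite eW.
have hB : B = B / W * W by rewrite divfK // gt_eqF.
set a := B / W.
rewrite [in X in _ <= X]hB [in X in X <= _]hB.
have := mulr_ge0 (ltW hW) (sqr_ge0 (c - a)).
rewrite -/a => h; rewrite -subr_ge0.
set A0 := \sum_(i < N) v i 0 ^+ 2.
have -> : A0 - c *+ 2 * (a * W) + c ^+ 2 * W - (A0 - a *+ 2 * (a * W) + a ^+ 2 * W)
  = W * (c - a) ^+ 2 by ring.
exact: h.
Qed.

Lemma eig_row N (A : 'M[R]_N) (v : 'cV[R]_N) mu : A^T = A -> A *m v = mu *: v ->
  v^T *m A = mu *: v^T.
Proof. by move=> hA hv; rewrite -[in LHS]hA -trmx_mul hv linearZ. Qed.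

Lemma eig_col N (A : 'M[R]_N) (r : 'rV[R]_N) mu : A^T = A -> r *m A = mu *: r ->
  A *m r^T = mu *: r^T.
Proof. by move=> hA hv; rewrite -[in LHS]hA -trmx_mul hv linearZ. Qed.

Lemma orth N (A : 'M[R]_N) (v u : 'cV[R]_N) a b : A^T = A ->
  A *m v = a *: v -> A *m u = b *: u -> a != b -> \sum_(i < N) v i 0 * u i 0 = 0.
Proof.
move=> hA hv hu hab.
have h1 : v^T *m (A *m u) = b *: (v^T *m u) by rewrite hu -scalemxAr.
rewrite mulmxA (@eig_row _ _ _ _ hA hv) -scalemxAl in h1.
have : (a - b) *: (v^T *m u) = 0 by rewrite scalerBl h1 subrr.
move/eqP; rewrite scaler_eq0 subr_eq0 (negbTE hab) /= => /eqP h.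
by rewrite -dotE h mxE.
Qed.

Lemma nz_of_norm N (v : 'cV[R]_N) : \sum_(i < N) v i 0 ^+ 2 = 1 -> v^T != 0.
Proof.
move=> hs; apply/eqP => h.
have : \sum_(i < N) v i 0 ^+ 2 = 0.
  apply: big1 => i _; have := congr1 (fun M : 'rV[R]_N => M 0 i) h; rewrite !mxE => ->.
  by rewrite expr0n.
by rewrite hs => /eqP; rewrite oner_eq0.
Qed.

Lemma normalize N (A : 'M[R]_N) (r : 'rV[R]_N) lam : A^T = A ->
  r *m A = lam *: r -> r != 0 ->
  exists u : 'cV[R]_N, A *m u = lam *: u /\ \sum_(i < N) u i 0 ^+ 2 = 1.
Proof.
move=> hA hr r0.
set u0 := r^T.
have hu0 : A *m u0 = lam *: u0 by exact: eig_col.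
set S := \sum_(i < N) u0 i 0 ^+ 2.
have S0 : 0 < S.
  rewrite lt_def sumr_ge0 ?andbT; last by move=> i _; exact: sqr_ge0.
  apply/eqP => hS; move/eqP: r0; apply.
  apply/matrixP => i j; rewrite !mxE.
  have := @psumr_eq0P _ _ xpredT (fun k => u0 k 0 ^+ 2) (fun k _ => sqr_ge0 _) hS j isT.
  rewrite /u0 mxE ord1 => /eqP; rewrite sqrf_eq0 => /eqP //.
exists ((Num.sqrt S)^-1 *: u0); split.
  by rewrite -scalemxAr hu0 !scalerA mulrC.
rewrite (eq_bigr (fun i : 'I_N => (Num.sqrt S)^-1 ^+ 2 * u0 i 0 ^+ 2)); last first.
  by move=> i _; rewrite mxE exprMn.
rewrite -mulr_sumr -/S exprVn sqr_sqrtr ?mulVf //; [exact: lt0r_neq0 | exact: ltW].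
Qed.

Lemma separation N (y u : 'cV[R]_N) (w : 'I_N -> R) (a b : R) :
  \sum_(i < N) y i 0 ^+ 2 = 1 -> \sum_(i < N) u i 0 ^+ 2 = 1 ->
  \sum_(i < N) y i 0 * u i 0 = 0 ->
  \sum_(i < N) (y i 0 - w i * a) ^+ 2 <= 1 / 4 ->
  \sum_(i < N) (u i 0 - w i * b) ^+ 2 <= 1 / 4 -> False.
Proof.
move=> hy hu hyu he hf.
have e1 : \sum_(i < N) (b * y i 0 - a * u i 0) ^+ 2 = b ^+ 2 + a ^+ 2.
  have -> : \sum_(i < N) (b * y i 0 - a * u i 0) ^+ 2 =
     b ^+ 2 * \sum_(i < N) y i 0 ^+ 2 - (2 * a * b) * \sum_(i < N) y i 0 * u i 0
     + a ^+ 2 * \sum_(i < N) u i 0 ^+ 2.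
    by rewrite !mulr_sumr -sumrB -big_split; apply: eq_bigr => i _ /=; ring.
  by rewrite hy hu hyu; ring.
have e2 : \sum_(i < N) (b * y i 0 - a * u i 0) ^+ 2 <=
   \sum_(i < N) (2 * b ^+ 2 * (y i 0 - w i * a) ^+ 2 + 2 * a ^+ 2 * (u i 0 - w i * b) ^+ 2).
  apply: ler_sum => i _.
  have -> : b * y i 0 - a * u i 0 = b * (y i 0 - w i * a) - a * (u i 0 - w i * b) by ring.
  set p := y i 0 - w i * a; set q := u i 0 - w i * b.
  have := sqr_ge0 (b * p + a * q); nra.
rewrite big_split /= -!mulr_sumr e1 in e2.
have hb := sqr_ge0 b; have ha := sqr_ge0 a.
have : a ^+ 2 + b ^+ 2 <= 0 by nra.
move=> hab.
have a0 : a = 0 by apply/eqP; rewrite -sqrf_eq0; apply/eqP; lra.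
move: he; rewrite a0 (eq_bigr (fun i : 'I_N => y i 0 ^+ 2)); last by move=> i _; rewrite mulr0 subr0.
rewrite hy; lra.
Qed.

End Lin.
Arguments dotE {R}.
Arguments proj_le {R} [N v w].
Arguments eig_row {R} [N A v mu].
Arguments eig_col {R} [N A r mu].
Arguments orth {R} [N A v u a b].
Arguments nz_of_norm {R} [N v].
Arguments normalize {R} [N A r lam].
Arguments separation {R} [N y u w a b].


Lemma norm1 (R : realType) N (v : 'cV[R]_N) : vnorm2 v = 1 -> \sum_(i < N) v i 0 ^+ 2 = 1.
Proof.
rewrite /vnorm2 => h.
have S0 : 0 <= \sum_(i < N) v i 0 ^+ 2 by apply: sumr_ge0 => i _; exact: sqr_ge0.
by rewrite -(sqr_sqrtr S0) h expr1n.
Qed.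

Lemma lam_gt2 (R : realType) (phi : R) : 1 < `|phi| -> 2 < `|phi + phi^-1|.
Proof.
move=> hp.
have hn : `|phi + phi^-1| = `|phi| + `|phi|^-1.
  have p0 : phi != 0 by rewrite -normr_gt0; lra.
  rewrite neq_lt in p0; case/orP: p0 => hs.
  - have hi : phi^-1 < 0 by rewrite invr_lt0.
    rewrite !ltr0_norm //; last lra.
    by rewrite invrN opprD.
  - have hi : 0 < phi^-1 by rewrite invr_gt0.
    rewrite !gtr0_norm //; lra.
rewrite hn -subr_gt0.
have -> : `|phi| + `|phi|^-1 - 2 = (`|phi| - 1) ^+ 2 / `|phi|.
  by field; rewrite gt_eqF //; lra.
apply: divr_gt0; last lra.
by rewrite exprn_even_gt0 //= subr_eq0 gt_eqF.
Qed.

Lemma ev_small (R : realType) (r : R) (nu : nat -> R) (l : R) :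
  0 <= r -> r < 1 -> nu @ \oo --> l ->
  forall t, 0 < t -> exists N, forall M, (N <= M)%N -> r ^+ M <= t /\ `|nu M.+2 - l| <= t.
Proof.
move=> r0 r1 hnu t t0.
have hr : `|r| < 1 by rewrite ger0_norm.
have := cvg_expr hr; move/cvgrPdist_le => /(_ t t0) [N1 _ H1].
move/cvgrPdist_le: hnu => /(_ t t0) [N2 _ H2].
exists (N1 + N2)%N => M hM; split.
  have := H1 M ltac:(rewrite /=; lia); rewrite /= sub0r normrN ger0_norm //.
  exact: exprn_ge0.
by have := H2 M.+2 ltac:(rewrite /=; lia); rewrite /= distrC.
Qed.


Theorem theorem3p3 (R : realType) (eps phi : R)
  (nu : nat -> R) (y : forall n : nat, 'cV[R]_n) :
  1 < `|phi| -> eps != phi ->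
  (forall n : nat, (2 <= n)%N ->
     Tmat n eps phi *m y n = nu n *: y n /\ vnorm2 (y n) = 1) ->
  nu @ \oo --> (phi + phi^-1) ->
  ((\forall n \near \oo, outlier (Tmat n eps phi) (nu n)) /\
   exists c : R, 0 < c /\
     \forall n \near \oo, forall lam : R,
       eigenvalue (Tmat n eps phi) lam -> lam != nu n ->
       c <= `|lam - (phi + phi^-1)|) /\
  (fun n => vnorm2 (y n - projspan (wvec n phi) (y n))) @ \oo --> (0 : R).
Proof.
move=> hp hne Hy Hnu.
set lam0 := phi + phi^-1.
set r := `|phi|^-1.
have r0 : 0 < r by rewrite invr_gt0; lra.
have r1 : r < 1 by rewrite invf_lt1 //; lra.
set K := Kc phi eps.
have K0 : 0 < K by apply: Kc_gt0.
have g0 : 0 < `|phi - eps| by rewrite normr_gt0 subr_eq0 eq_sym.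
have ev := @ev_small R r nu lam0 (ltW r0) r1 Hnu.
have loc : forall t M mu (v : 'cV[R]_(M.+2)), 0 <= t -> t <= 1 -> 2 * t <= `|phi - eps| ->
    r ^+ M <= t -> `|mu - lam0| <= t ->
    Tmat M.+2 eps phi *m v = mu *: v -> \sum_(i < M.+2) v i 0 ^+ 2 = 1 ->
    \sum_(i < M.+2) (v i 0 - phi ^- (M.+1 - i) * v ord_max 0) ^+ 2 <= K * (2 * t) ^+ 2.
  move=> t M mu v t0 t1 t2 hrM hmu hT hs.
  have hs1 : \sum_(i < M.+2) v i 0 ^+ 2 <= 1 by rewrite hs.
  have h1 : `|mu - (phi + phi^-1)| <= 1 by rewrite -/lam0; lra.
  have h2 : 2 * `|mu - (phi + phi^-1)| <= `|phi - eps| by rewrite -/lam0; lra.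
  apply: le_trans (loc_mat hp hne hT hs1 h1 h2) _.
  apply: ler_wpM2l; first exact: ltW.
  have := normr_ge0 (mu - lam0); have := exprn_ge0 M (ltW r0) => ha hb.
  apply: lerXn2r; rewrite ?nnegrE -/lam0 -/r; lra.
have l2 := @lam_gt2 R phi hp.
split; [split|].
- have := Hnu; move/cvgrPdist_lt => /(_ (`|lam0| - 2) ltac:(rewrite subr_gt0 //)) [N _ HN].
  exists N.+2 => // n /= hn.
  have [hT hn1] := Hy n ltac:(lia).
  split.
    apply/eigenvalueP; exists (y n)^T; first exact: eig_row (Tmat_tr n eps phi) hT.
    exact: nz_of_norm (@norm1 _ _ _ hn1).
  move=> /andP [ha hb].
  have := HN n ltac:(rewrite /=; lia); rewrite /=.
  have := ler_normD (lam0 - nu n) (nu n); rewrite subrK.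
  have : `|nu n| <= 2 by rewrite ler_norml ha hb.
  lra.
- set c := Num.min (Num.min 1 (`|phi - eps| / 2)) ((4 * (K + 1))^-1).
  have c0 : 0 < c.
    rewrite !lt_min ltr01 /=; apply/andP; split; first by apply: divr_gt0.
    by rewrite invr_gt0; lra.
  have [c1 [c2 c3]] : c <= 1 /\ c <= `|phi - eps| / 2 /\ c <= (4 * (K + 1))^-1.
    by have := le_refl c; rewrite {2}/c !le_min => /andP[/andP[-> ->] ->].
  exists c; split => //.
  have [N HN] := ev c c0.
  exists N.+2 => // n /= hn.
  case: n hn => [|[|M]] hn //.
  have hM : (N <= M)%N by lia.
  have [hrM hnuM] := HN M hM.
  move=> lam /eigenvalueP [rv hrv rv0] hlam.
  rewrite leNgt; apply/negP => hlt.
  have [u [hu hu1]] := normalize (Tmat_tr M.+2 eps phi) hrv rv0.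
  have [hT hn1] := Hy M.+2 isT.
  have hs := @norm1 _ _ _ hn1.
  have hne' : nu M.+2 != lam by rewrite eq_sym.
  have horth := orth (Tmat_tr _ _ _) hT hu hne'.
  have hc4 : 4 * (K + 1) * c <= 1.
    have h4 : 0 < 4 * (K + 1) by lra.
    have hnz : 4 * (K + 1) != 0 by rewrite gt_eqF.
    by move: (ler_wpM2l (ltW h4) c3); rewrite mulfV.
  have hbound : K * (2 * c) ^+ 2 <= 1 / 4.
    have hA : 4 * K * c <= 1 by nra.
    have hB : 4 * c <= 1 by nra.
    have -> : K * (2 * c) ^+ 2 = (4 * K * c) * c by ring.
    have : (4 * K * c) * c <= 1 * c by apply: ler_wpM2r; [exact: ltW|].
    lra.
  have ey := loc c M (nu M.+2) (y M.+2) (ltW c0) c1 ltac:(lra) hrM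
    hnuM hT hs.
  have eu := loc c M lam u (ltW c0) c1 ltac:(lra) hrM (ltW hlt) hu hu1.
  exact: (separation hs hu1 horth (le_trans ey hbound) (le_trans eu hbound)).
- apply/cvgrPdist_le => e e0.
  set t := Num.min (Num.min 1 (`|phi - eps| / 2)) (e / (2 * (K + 1))).
  have t0 : 0 < t.
    rewrite !lt_min ltr01 /=; apply/andP; split; first by apply: divr_gt0.
    by apply: divr_gt0 => //; lra.
  have [t1 [t2 t3]] : t <= 1 /\ t <= `|phi - eps| / 2 /\ t <= e / (2 * (K + 1)).
    by have := le_refl t; rewrite {2}/t !le_min => /andP[/andP[-> ->] ->].
  have [N HN] := ev t t0.
  exists N.+2 => // n /= hn.
  case: n hn => [|[|M]] hn //.
  have hM : (N <= M)%N by lia.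
  have [hrM hnuM] := HN M hM.
  have [hT hn1] := Hy M.+2 isT.
  have hs := @norm1 _ _ _ hn1.
  rewrite sub0r normrN ger0_norm; last by rewrite /vnorm2 sqrtr_ge0.
  have ey := loc t M (nu M.+2) (y M.+2) (ltW t0) t1 ltac:(lra) hrM
    hnuM hT hs.
  have W0 : 0 < \sum_(i < M.+2) (wvec M.+2 phi) i 0 ^+ 2.
    rewrite (bigD1 ord_max) //= mxE /= subnn expr0 invr1 expr1n.
    apply: ltr_wpDr; last exact: ltr01.
    by apply: sumr_ge0 => i _; exact: sqr_ge0.
  have hpr := @proj_le R _ (y M.+2) (wvec M.+2 phi) (y M.+2 ord_max 0) W0.
  have eqs : \sum_(i < M.+2) (y M.+2 i 0 - y M.+2 ord_max 0 * (wvec M.+2 phi) i 0) ^+ 2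
     = \sum_(i < M.+2) (y M.+2 i 0 - phi ^- (M.+1 - i) * y M.+2 ord_max 0) ^+ 2.
    by apply: eq_bigr => i _; rewrite mxE /= mulrC.
  rewrite eqs in hpr.
  have hK : K * (2 * t) ^+ 2 <= e ^+ 2.
    have h4 : 0 < 2 * (K + 1) by lra.
    have h5 : 2 * (K + 1) * t <= e.
      have hnz : 2 * (K + 1) != 0 by rewrite gt_eqF.
      by move: (ler_wpM2l (ltW h4) t3); rewrite mulrCA mulfV ?mulr1.
    have h6 : (2 * (K + 1) * t) ^+ 2 <= e ^+ 2.
      by apply: lerXn2r; rewrite ?nnegrE //; [apply: mulr_ge0; lra | lra].
    have h7 : K * (2 * t) ^+ 2 <= (2 * (K + 1) * t) ^+ 2.
      have -> : (2 * (K + 1) * t) ^+ 2 = (K + 1) ^+ 2 * (2 * t) ^+ 2 by ring.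
      apply: ler_wpM2r; first exact: sqr_ge0.
      have := sqr_ge0 K; nra.
    exact: le_trans h7 h6.
  rewrite /vnorm2 -(ger0_norm (ltW e0)) -sqrtr_sqr ler_sqrt; last exact: sqr_ge0.
  exact: le_trans hpr (le_trans ey hK).
Qed.
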